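(* Let $n \geq 8$ and let $P$ be an $n \times n$ partial Latin square on the symbols $\{1,\dots,n\}$ in which two rows and three columns are completely filled and every other cell (i.e. every cell lying neither in one of these two rows nor in one of these three columns) is empty. Suppose that the $2 \times 3$ subarray formed by the intersection of the two filled rows and the three filled columns is a Latin rectangle, i.e. it contains exactly three distinct symbols (so each of its two rows contains the same three symbols). Then $P$ is completable, i.e. there is an $n\times n$ Latin square $L$ with $L(i,j)=P(i,j)$ for every nonempty cell $(i,j)$ of $P$.
   Context: A partial Latin square of order $n$ is an $n\times n$ array in which each cell is empty or contains one symbol from $\{1,\dots,n\}$, and each symbol occurs at most once in each row and each column. A Latin square has no empty cells. A Latin rectangle of size $r\times s$ is an $r\times s$ array with no empty cells and entries from $\{1,\dots,\max\{r,s\}\}$ in which each symbol occurs at most once in each row and column. *)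

(* Defs.v *)
From mathcomp Require Import all_boot.
Set Implicit Arguments. Unset Strict Implicit. Unset Printing Implicit Defensive.

(* A partial array of order n: cell (i,j) is None (empty) or Some s,
   symbols are 'I_n, i.e. {0,...,n-1} standing for {1,...,n}. *)
Definition parray (n : nat) := 'I_n -> 'I_n -> option 'I_n.

Definition is_partial_latin n (P : parray n) : Prop :=
  (forall i j1 j2 s, P i j1 = Some s -> P i j2 = Some s -> j1 = j2) /\
  (forall i1 i2 j s, P i1 j = Some s -> P i2 j = Some s -> i1 = i2).

Definition is_latin_square n (L : 'I_n -> 'I_n -> 'I_n) : Prop :=
  is_partial_latin (fun i j => Some (L i j)).

Definition completes n (L : 'I_n -> 'I_n -> 'I_n) (P : parray n) : Prop :=
  forall i j s, P i j = Some s -> L i j = s.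

Definition completable n (P : parray n) : Prop :=
  exists L, is_latin_square L /\ completes L P.

(* Main.v *)
Require Import Defs.
From mathcomp Require Import all_boot.
From mathcomp Require Import zify.
Set Implicit Arguments. Unset Strict Implicit. Unset Printing Implicit Defensive.

(* Proof outline: conjugating the D-part (symbols outside the 2x3 block) gives a
   list-edge-colouring problem on an (n-5)-regular bipartite graph with lists of size
   n-5, solved by Galvin's kernel method (Hall -> Konig -> stable matchings).
   The remaining three block symbols are placed via a 3-regular bipartite
   multigraph colouring (Konig). *)

Section Hall.
Variables (A B : finType) (b0 : B).

Definition nbh (R : A -> B -> bool) (X : {set A}) : {set B} :=
  [set b | [exists a in X, R a b]].

Lemma nbhU R (X Y : {set A}) : nbh R (X :|: Y) = nbh R X :|: nbh R Y.
Proof.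
apply/setP=> b; rewrite !inE; apply/existsP/orP.
- by case=> a /andP[]; rewrite inE => /orP[] Ha Rab; [left|right]; apply/existsP; exists a; rewrite Ha.
- by case=> /existsP[a /andP[Ha Rab]]; exists a; rewrite inE Ha ?orbT.
Qed.

Lemma nbhS R (X Y : {set A}) : X \subset Y -> nbh R X \subset nbh R Y.
Proof.
move=> sXY; apply/subsetP=> b; rewrite !inE => /existsP[a /andP[Ha Rab]].
by apply/existsP; exists a; rewrite (subsetP sXY).
Qed.

Lemma hall_gen k : forall (X : {set A}) (R : A -> B -> bool), #|X| <= k ->
  (forall Y : {set A}, Y \subset X -> #|Y| <= #|nbh R Y|) ->
  exists g : A -> B, {in X &, injective g} /\ forall a, a \in X -> R a (g a).
Proof.
elim: k => [|k IH] X R.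
  rewrite leqn0 cards_eq0 => /eqP -> _; exists (fun _ => b0).
  by split; [move=> a; rewrite inE|move=> a; rewrite inE].
move=> cX hR.
case: (set_0Vmem X) => [->|[a0 Xa0]].
  exists (fun _ => b0); by split; [move=> a; rewrite inE|move=> a; rewrite inE].
case: (boolP [exists Y : {set A}, [&& Y \proper X, Y != set0 & #|nbh R Y| <= #|Y|]]).
- case/existsP=> Y /and3P[pYX nY0 tY].
  have sYX := proper_sub pYX.
  have [g1 [ig1 Rg1]] : exists g : A -> B, {in Y &, injective g} /\ forall a, a \in Y -> R a (g a).
    apply: IH.
      by have := proper_card pYX; lia.
    by move=> Z sZY; apply: hR; apply: subset_trans sZY sYX.
  pose R' a b := R a b && (b \notin nbh R Y).
  have [g2 [ig2 Rg2]] : exists g : A -> B, {in X :\: Y &, injective g} /\ forall a, a \in X :\: Y -> R' a (g a).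
    apply: IH.
      have : 0 < #|Y| by rewrite card_gt0.
      have := cardsID Y X; rewrite (setIidPr sYX); lia.
    move=> Z sZ.
    have -> : nbh R' Z = nbh R Z :\: nbh R Y.
      apply/setP=> b; rewrite !inE; apply/existsP/andP.
      - case=> a /andP[Ha /andP[Rab]]; rewrite inE => nb; split=> //; apply/existsP; exists a; by rewrite Ha.
      - by case=> nb /existsP[a /andP[Ha Rab]]; exists a; rewrite Ha /R' Rab inE nb.
    have dZY : [disjoint Z & Y].
      apply/pred0P=> a /=; apply/negbTE/negP => /andP[Za Ya].
      by move: (subsetP sZ a Za); rewrite inE Ya.
    have sZYX : Z :|: Y \subset X.
      by rewrite subUset sYX andbT; apply: subset_trans sZ (subsetDl _ _).
    have h1 := hR _ sZYX.
    rewrite nbhU in h1.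
    have := cardsU Z Y; rewrite (disjoint_setI0 dZY) cards0.
    have := cardsU (nbh R Z) (nbh R Y).
    have := cardsID (nbh R Y) (nbh R Z).
    have := subset_leq_card (subsetIr (nbh R Z) (nbh R Y)).
    rewrite setIC. lia.
  exists (fun a => if a \in Y then g1 a else g2 a); split.
  + move=> a a' Xa Xa'; case: ifP => Ya; case: ifP => Ya'.
    * exact: ig1.
    * move=> e; have : g2 a' \notin nbh R Y.
        by have := Rg2 a'; rewrite inE Ya' Xa' => /(_ isT) /andP[].
      rewrite -e inE; case/negP; apply/existsP; exists a; rewrite Ya; exact: Rg1.
    * move=> e; have : g2 a \notin nbh R Y.
        by have := Rg2 a; rewrite inE Ya Xa => /(_ isT) /andP[].
      rewrite e inE; case/negP; apply/existsP; exists a'; rewrite Ya'; exact: Rg1.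
    * by apply: ig2; rewrite inE ?Ya ?Ya' ?Xa ?Xa'.
  + move=> a Xa; case: ifP => Ya; first exact: Rg1.
    by have := Rg2 a; rewrite inE Ya Xa => /(_ isT) /andP[].
- move=> nt.
  have : 0 < #|nbh R [set a0]|.
    by have := hR [set a0]; rewrite sub1set cards1 => /(_ Xa0).
  rewrite card_gt0 => /set0Pn[b /[!inE] /existsP[a1 /andP[]]]; rewrite inE => /eqP -> Rab.
  pose R' a b' := R a b' && (b' != b).
  have [g [ig Rg]] : exists g : A -> B, {in X :\ a0 &, injective g} /\ forall a, a \in X :\ a0 -> R' a (g a).
    apply: IH.
      by have := cardsD1 a0 X; rewrite Xa0; lia.
    move=> Z sZ.
    have -> : nbh R' Z = nbh R Z :\ b.
      apply/setP=> b'; rewrite !inE; apply/existsP/andP.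
      - case=> a /andP[Ha /andP[Rab' nb]]; split=> //; apply/existsP; exists a; by rewrite Ha.
      - by case=> nb /existsP[a /andP[Ha Rab']]; exists a; rewrite Ha /R' Rab' nb.
    case: (set_0Vmem Z) => [->|[z Zz]]; first by rewrite cards0.
    have sZX : Z \subset X by apply: subset_trans sZ (subsetDl _ _).
    have pZX : Z \proper X.
      rewrite properE sZX /=; apply/subsetPn; exists a0 => //.
      by apply/negP=> Za0; move: (subsetP sZ _ Za0); rewrite !inE eqxx.
    have : ~~ [&& Z \proper X, Z != set0 & #|nbh R Z| <= #|Z|].
      by apply/negP=> h; case/negP: nt; apply/existsP; exists Z.
    rewrite pZX /=; have -> : Z != set0 by apply/set0Pn; exists z.
    rewrite /= -ltnNge => h.
    have := cardsD1 b (nbh R Z); lia.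
  exists (fun a => if a == a0 then b else g a); split.
  + move=> a a' Xa Xa'; case: (a =P a0) => [Ea|na]; case: (a' =P a0) => [Ea'|na'].
    * by rewrite Ea Ea'.
    * move=> e; have : R' a' (g a') by apply: Rg; rewrite !inE Xa' andbT; apply/eqP.
      by rewrite /R' -e eqxx andbF.
    * move=> e; have : R' a (g a) by apply: Rg; rewrite !inE Xa andbT; apply/eqP.
      by rewrite /R' e eqxx andbF.
    * by apply: ig; rewrite !inE ?Xa ?Xa' andbT; apply/eqP.
  + move=> a Xa; case: eqP => [->//|na].
    have : R' a (g a) by apply: Rg; rewrite !inE Xa andbT; apply/eqP.
    by case/andP.
Qed.
End Hall.

Section Konig.
Variables (E A B : finType) (u : E -> A) (v : E -> B).

Lemma card_fib (T : finType) (w : E -> T) (S : {set E}) (X : {set T}) :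
  (forall e, e \in S -> w e \in X) ->
  #|S| = \sum_(x in X) #|[set e in S | w e == x]|.
Proof.
move=> hS; rewrite -sum1_card (partition_big w (mem X)) //=.
by apply: eq_bigr => x _; rewrite sum1_card; apply: eq_card => e; rewrite !inE.
Qed.

Lemma card_fib_const (T : finType) (w : E -> T) (S : {set E}) (X : {set T}) d :
  (forall e, e \in S -> w e \in X) ->
  (forall x, x \in X -> #|[set e in S | w e == x]| = d) ->
  #|S| = #|X| * d.
Proof.
move=> hS hd; rewrite (card_fib hS) (eq_bigr (fun _ => d)) //.
by rewrite sum_nat_const mulnC.
Qed.

Definition adjE (e e' : E) := (e != e') && ((u e == u e') || (v e == v e')).

Lemma perfect_matching d (b0 : B) (S : {set E}) (XA : {set A}) (XB : {set B}) :
  (forall e, e \in S -> (u e \in XA) && (v e \in XB)) ->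
  (forall a, a \in XA -> #|[set e in S | u e == a]| = d.+1) ->
  (forall b, b \in XB -> #|[set e in S | v e == b]| = d.+1) ->
  exists M : {set E}, M \subset S /\
    (forall a, a \in XA -> #|[set e in M | u e == a]| = 1) /\
    (forall b, b \in XB -> #|[set e in M | v e == b]| = 1).
Proof.
move=> hS hA hB.
have eAB : #|XA| = #|XB|.
  have h1 := card_fib_const (w := u) (X := XA) (fun e He => proj1 (andP (hS e He))) hA.
  have h2 := card_fib_const (w := v) (X := XB) (fun e He => proj2 (andP (hS e He))) hB.
  by apply/eqP; rewrite -(eqn_pmul2r (ltn0Sn d)) -h1 -h2.
pose R a b := [exists e in S, (u e == a) && (v e == b)].
have [g [ig Rg]] : exists g : A -> B, {in XA &, injective g} /\ forall a, a \in XA -> R a (g a).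
  apply: (hall_gen b0 (leqnn _)) => Y sY.
  have sN : nbh R Y \subset XB.
    apply/subsetP=> b; rewrite inE => /existsP[a /andP[_ /existsP[e /and3P[Se _ /eqP <-]]]].
    by case/andP: (hS e Se).
  pose SY := [set e in S | u e \in Y].
  have h1 : #|SY| = #|Y| * d.+1.
    apply: (card_fib_const (w := u)).
      by move=> e; rewrite inE; case/andP.
    move=> a Ya; rewrite -(hA a (subsetP sY a Ya)); apply: eq_card => e; rewrite !inE.
    by case: (e \in S) => //=; case: (u e =P a) => [->|]; rewrite ?Ya ?andbF.
  pose SN := [set e in S | v e \in nbh R Y].
  have h2 : #|SN| = #|nbh R Y| * d.+1.
    apply: (card_fib_const (w := v)).
      by move=> e; rewrite inE; case/andP.
    move=> b Nb; rewrite -(hB b (subsetP sN b Nb)); apply: eq_card => e; rewrite !inE.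
    by move: Nb; rewrite inE => Nb; case: (e \in S) => //=; case: (v e =P b) => [->|]; rewrite ?Nb ?andbF.
  have : #|SY| <= #|SN|.
    apply: subset_leq_card; apply/subsetP=> e; rewrite !inE => /andP[Se Ye]; rewrite Se /=.
    by apply/existsP; exists (u e); rewrite Ye; apply/existsP; exists e; rewrite Se !eqxx.
  by rewrite h1 h2 leq_pmul2r.
have gXB : {in XA, forall a, g a \in XB}.
  move=> a Xa; case/existsP: (Rg a Xa) => e /and3P[Se /eqP ea /eqP <-].
  by case/andP: (hS e Se).
have gim : g @: XA = XB.
  apply/eqP; rewrite eqEcard (card_in_imset ig) eAB leqnn andbT.
  by apply/subsetP=> b /imsetP[a Xa ->]; exact: gXB.
pose ed a := [pick e in S | (u e == a) && (v e == g a)].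
have edS : forall a, a \in XA -> exists e, [/\ ed a = Some e, e \in S, u e = a & v e = g a].
  move=> a Xa; rewrite /ed; case: pickP => [e /andP[Se /andP[/eqP h1 /eqP h2]]|h].
    by exists e; split.
  case/existsP: (Rg a Xa) => e /andP[Se H]; by move: (h e); rewrite Se H.
pose M := [set e in S | ed (u e) == Some e].
exists M; split; first by apply/subsetP=> e; rewrite inE => /andP[].
split.
- move=> a Xa; case: (edS a Xa) => e [h1 h2 h3 h4].
  rewrite -(cards1 e); apply: eq_card => e'; rewrite !inE.
  apply/idP/idP.
    case/andP=> /andP[Se' /eqP h] /eqP ha; move: h; rewrite ha h1; by case=> ->.
  by move/eqP=> ->; rewrite h2 h3 h1 !eqxx.
- move=> b Xb; have : b \in g @: XA by rewrite gim.
  case/imsetP=> a Xa ->; case: (edS a Xa) => e [h1 h2 h3 h4].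
  rewrite -(cards1 e); apply: eq_card => e'; rewrite !inE.
  apply/idP/idP.
    case/andP=> /andP[Se' /eqP h] /eqP hv.
    have Xu : u e' \in XA by case/andP: (hS e' Se').
    case: (edS _ Xu) => e2 [k1 k2 k3 k4].
    move: h; rewrite k1 => -[?]; subst e2.
    have : u e' = a by apply: ig => //; rewrite -k4 hv.
    by move=> ea; move: k1; rewrite ea h1 => -[->].
  by move/eqP=> ->; rewrite h2 h3 h1 h4 !eqxx.
Qed.

Lemma konig (b0 : B) d : forall (S : {set E}) (XA : {set A}) (XB : {set B}),
  (forall e, e \in S -> (u e \in XA) && (v e \in XB)) ->
  (forall a, a \in XA -> #|[set e in S | u e == a]| = d) ->
  (forall b, b \in XB -> #|[set e in S | v e == b]| = d) ->
  exists f : E -> nat, (forall e, e \in S -> f e < d) /\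
    (forall e e', e \in S -> e' \in S -> adjE e e' -> f e != f e').
Proof.
elim: d => [|d IH] S XA XB hS hA hB.
  have S0 : forall e, e \in S -> False.
    move=> e Se; case/andP: (hS e Se) => Xa _.
    have := hA _ Xa; move/eqP; rewrite cards_eq0 => /eqP/setP/(_ e).
    by rewrite !inE Se eqxx.
  by exists (fun _ => 0); split=> [e /S0|e e' /S0].
case: (perfect_matching b0 hS hA hB) => M [sMS [hMA hMB]].
have [f [fb fp]] : exists f : E -> nat, (forall e, e \in S :\: M -> f e < d) /\
    (forall e e', e \in S :\: M -> e' \in S :\: M -> adjE e e' -> f e != f e').
  apply: (IH _ XA XB).
  - by move=> e; rewrite inE => /andP[_ /hS].
  - move=> a Xa; have := cardsID M [set e in S | u e == a].
    have -> : [set e in S | u e == a] :&: M = [set e in M | u e == a].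
      apply/setP=> e; rewrite !inE; apply/idP/idP; first by case/andP=> /andP[_ ->] ->.
      by case/andP=> Me ->; rewrite (subsetP sMS e Me).
    rewrite hA // hMA // => h.
    have -> : [set e in S :\: M | u e == a] = [set e in S | u e == a] :\: M.
      by apply/setP=> e; rewrite !inE; case: (e \in M); case: (e \in S).
    lia.
  - move=> b Xb; have := cardsID M [set e in S | v e == b].
    have -> : [set e in S | v e == b] :&: M = [set e in M | v e == b].
      apply/setP=> e; rewrite !inE; apply/idP/idP; first by case/andP=> /andP[_ ->] ->.
      by case/andP=> Me ->; rewrite (subsetP sMS e Me).
    rewrite hB // hMB // => h.
    have -> : [set e in S :\: M | v e == b] = [set e in S | v e == b] :\: M.
      by apply/setP=> e; rewrite !inE; case: (e \in M); case: (e \in S).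
    lia.
exists (fun e => if e \in M then d else f e); split.
  move=> e Se; case: ifP => Me //; apply: leqW; apply: fb; by rewrite inE Me Se.
have Mmatch : forall e e', e \in M -> e' \in M -> adjE e e' -> False.
  move=> e e' Me Me' /andP[ne /orP[]] /eqP eq.
  - have Xa : u e \in XA by case/andP: (hS e (subsetP sMS e Me)).
    have := hMA _ Xa; have : [set e; e'] \subset [set e0 in M | u e0 == u e].
      by apply/subsetP=> x; rewrite !inE => /orP[] /eqP ->; rewrite ?Me ?Me' ?eq eqxx.
    move/subset_leq_card; rewrite cards2 ne => h1 h2; move: h1; by rewrite h2.
  - have Xb : v e \in XB by case/andP: (hS e (subsetP sMS e Me)).
    have := hMB _ Xb; have : [set e; e'] \subset [set e0 in M | v e0 == v e].
      by apply/subsetP=> x; rewrite !inE => /orP[] /eqP ->; rewrite ?Me ?Me' ?eq eqxx.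
    move/subset_leq_card; rewrite cards2 ne => h1 h2; move: h1; by rewrite h2.
move=> e e' Se Se' ad; case: ifP => Me; case: ifP => Me'.
- by case: (Mmatch e e' Me Me' ad).
- by have := fb e'; rewrite inE Me' Se' => /(_ isT) h; rewrite neq_ltn h orbT.
- by have := fb e; rewrite inE Me Se => /(_ isT) h; rewrite neq_ltn h.
- by apply: fp => //; rewrite inE ?Me ?Me' ?Se ?Se'.
Qed.
End Konig.

Section Galvin.
Variables (E A B : finType) (u : E -> A) (v : E -> B) (f : E -> nat).

Definition dom (e' e : E) := (e' != e) &&
  (((u e' == u e) && (f e < f e')) || ((v e' == v e) && (f e' < f e))).

Definition properS (S : {set E}) :=
  forall e e', e \in S -> e' \in S -> adjE u v e e' -> f e != f e'.

Definition topb (T : {set E}) e := [forall e', ((e' \in T) && (u e' == u e)) ==> (f e' <= f e)].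

Lemma stable k : forall T : {set E}, #|T| <= k -> properS T ->
  exists M : {set E}, [/\ M \subset T,
    (forall e e', e \in M -> e' \in M -> ~~ adjE u v e e') &
    (forall e, e \in T -> e \notin M -> exists2 e', e' \in M & dom e' e)].
Proof.
elim: k => [|k IH] T.
  rewrite leqn0 cards_eq0 => /eqP -> _; exists set0; split; first exact: sub0set.
  - by move=> e e'; rewrite inE.
  - by move=> e; rewrite inE.
move=> cT pT.
case: (boolP [exists e1, exists e2, [&& e1 \in T, e2 \in T, e1 != e2, v e1 == v e2,
   f e2 < f e1, topb T e1 & topb T e2]]).
- case/existsP=> e1 /existsP[e2 /and5P[T1 T2 n12 v12 /and3P[f21 t1 t2]]].
  have [M [sM mM dM]] : exists M : {set E}, [/\ M \subset T :\ e1,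
    (forall e e', e \in M -> e' \in M -> ~~ adjE u v e e') &
    (forall e, e \in T :\ e1 -> e \notin M -> exists2 e', e' \in M & dom e' e)].
    apply: IH.
      by have := cardsD1 e1 T; rewrite T1; move: cT; clear; lia.
    by move=> e e' /setD1P[_ He] /setD1P[_ He']; apply: pT.
  exists M; split => //.
    by apply: subset_trans sM (subsetDl _ _).
  move=> e Te nMe; case: (e =P e1) => [->|ne]; last by apply: dM => //; rewrite !inE Te andbT; apply/eqP.
  have T2' : e2 \in T :\ e1 by rewrite !inE T2 eq_sym n12.
  case: (boolP (e2 \in M)) => M2.
    exists e2 => //; rewrite /dom eq_sym n12 /= (eqP v12) eqxx f21; by rewrite orbT.
  case: (dM e2 T2' M2) => e' Me' /andP[ne' /orP[] /andP[/eqP ue' fe']].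
    have Te' : e' \in T by case/setD1P: (subsetP sM e' Me').
    have : f e' <= f e2.
      by move/forallP: t2 => /(_ e') /implyP; apply; rewrite Te' ue' eqxx.
    by move=> h; move: fe'; rewrite ltnNge h.
  exists e' => //; rewrite /dom ue' (eqP v12) eqxx /=.
  have -> : e' != e1 by case/setD1P: (subsetP sM e' Me').
  by rewrite /= (ltn_trans fe' f21) orbT.
- move=> nex.
  pose M := [set e in T | topb T e].
  exists M; split.
  + by apply/subsetP=> e; rewrite inE => /andP[].
  + move=> e e' /[!inE] /andP[Te te] /andP[Te' te']; apply/negP=> ad.
    have fne := pT e e' Te Te' ad.
    case/andP: ad => ne /orP[] /eqP eq.
      move/forallP: te => /(_ e') /implyP /(_ _) h1.
      move/forallP: te' => /(_ e) /implyP /(_ _) h2.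
      have := h1; rewrite Te' eq eqxx => /(_ isT) => k1.
      have := h2; rewrite Te eq eqxx => /(_ isT) => k2.
      by move: fne; rewrite eqn_leq k1 k2.
    case/negP: nex.
    case: (ltngtP (f e) (f e')) => h; last by move: fne; rewrite h eqxx.
      by apply/existsP; exists e'; apply/existsP; exists e; rewrite Te Te' eq_sym ne eq eqxx h te te'.
    by apply/existsP; exists e; apply/existsP; exists e'; rewrite Te Te' ne eq eqxx h te te'.
  + move=> e Te; rewrite inE Te /= => nte.
    have [t /andP[Tt /eqP ut] tmax] : exists2 t, (t \in T) && (u t == u e) &
        forall t', (t' \in T) && (u t' == u e) -> f t' <= f t.
      case: (@arg_maxnP _ e (fun t => (t \in T) && (u t == u e)) f); first by rewrite Te eqxx.
      by move=> t h1 h2; exists t.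
    have tt : topb T t.
      by apply/forallP=> t'; apply/implyP=> /andP[Tt' /eqP ut']; apply: tmax; rewrite Tt' ut' ut eqxx.
    exists t; first by rewrite inE Tt tt.
    case/forallPn: nte => e'; rewrite negb_imply => /andP[/andP[Te' /eqP ue'] fe'].
    have := tmax e'; rewrite Te' ue' eqxx => /(_ isT) h.
    rewrite /dom ut eqxx /=; rewrite -ltnNge in fe'.
    have -> : t != e by apply/eqP=> te; move: h fe'; rewrite te; clear; lia.
    by rewrite /=; apply/orP; left; move: h fe'; clear; lia.
Qed.

Definition outd (S : {set E}) e := #|[set e' in S | dom e' e]|.

Lemma kernel_col (K : finType) (k0 : K) k : forall (S : {set E}) (L : E -> {set K}),
  #|S| <= k -> properS S -> (forall e, e \in S -> outd S e < #|L e|) ->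
  exists col : E -> K, (forall e, e \in S -> col e \in L e) /\
    (forall e e', e \in S -> e' \in S -> adjE u v e e' -> col e != col e').
Proof.
elim: k => [|k IH] S L.
  rewrite leqn0 cards_eq0 => /eqP -> _ _; exists (fun _ => k0); split => [e|e e']; by rewrite inE.
move=> cS pS hL.
case: (set_0Vmem S) => [S0|[e0 Se0]].
  exists (fun _ => k0); split => [e|e e']; by rewrite S0 inE.
have : 0 < #|L e0| by have := hL e0 Se0; clear; lia.
rewrite card_gt0 => /set0Pn[kap Lk].
pose Sk := [set e in S | kap \in L e].
have pSk : properS Sk by move=> e e' /[!inE] /andP[Se _] /andP[Se' _]; apply: pS.
case: (stable (leqnn _) pSk) => M [sM mM dM].
have sMS : M \subset S by apply: subset_trans sM _; apply/subsetP=> e; rewrite inE => /andP[].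
have M0 : M != set0.
  have Ske0 : e0 \in Sk by rewrite inE Se0 Lk.
  case: (boolP (e0 \in M)) => h; first by apply/set0Pn; exists e0.
  by case: (dM e0 Ske0 h) => e' Me' _; apply/set0Pn; exists e'.
pose L' e := L e :\ kap.
have [col' [c1 c2]] : exists col : E -> K, (forall e, e \in S :\: M -> col e \in L' e) /\
    (forall e e', e \in S :\: M -> e' \in S :\: M -> adjE u v e e' -> col e != col e').
  apply: IH.
  - have := cardsID M S; rewrite (setIidPr sMS).
    have : 0 < #|M| by rewrite card_gt0.
    move: cS; clear; lia.
  - by move=> e e' /setDP[Se _] /setDP[Se' _]; apply: pS.
  - move=> e /setDP[Se nMe].
    have sub : [set e' in S :\: M | dom e' e] \subset [set e' in S | dom e' e].
      by apply/subsetP=> x; rewrite !inE => /andP[/andP[_ ->] ->].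
    case: (boolP (kap \in L e)) => Lke.
    + have Ske : e \in Sk by rewrite inE Se Lke.
      case: (dM e Ske nMe) => e' Me' de'.
      have sub' : [set e' in S :\: M | dom e' e] \subset [set e' in S | dom e' e] :\ e'.
        apply/subsetP=> x; rewrite !inE => /andP[/andP[nMx Sx] dx]; rewrite Sx dx !andbT.
        by apply/eqP=> xe; move: nMx; rewrite xe Me'.
      have := subset_leq_card sub'.
      have := cardsD1 e' [set e' in S | dom e' e]; rewrite !inE (subsetP sMS e' Me') de' /=.
      have := cardsD1 kap (L e); rewrite Lke.
      have := hL e Se; rewrite /outd /L'; clear; lia.
    + have -> : L' e = L e by apply/setP=> x; rewrite !inE; case: eqP => // ->; rewrite (negbTE Lke).
      have := subset_leq_card sub; have := hL e Se; rewrite /outd; clear; lia.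
exists (fun e => if e \in M then kap else col' e); split.
  move=> e Se; case: ifP => Me; first by have := subsetP sM e Me; rewrite inE => /andP[].
  by have := c1 e; rewrite inE Me Se => /(_ isT); rewrite inE => /andP[].
move=> e e' Se Se' ad; case: ifP => Me; case: ifP => Me'.
- by have := mM e e' Me Me'; rewrite ad.
- have := c1 e'; rewrite inE Me' Se' => /(_ isT); rewrite !inE => /andP[h _]; by rewrite eq_sym.
- by have := c1 e; rewrite inE Me Se => /(_ isT); rewrite !inE => /andP[h _].
- by apply: c2 => //; rewrite inE ?Me ?Me' ?Se ?Se'.
Qed.

Lemma uniq_bound (S : {set E}) lo hi :
  {in S &, injective f} -> (forall e, e \in S -> lo <= f e < hi) -> #|S| <= hi - lo.
Proof.
move=> inj hb.
have := @uniq_leq_size _ (map f (enum S)) (iota lo (hi - lo)).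
rewrite size_map size_iota -cardE; apply.
  by rewrite map_inj_in_uniq ?enum_uniq // => x y; rewrite !mem_enum; apply: inj.
move=> x /mapP[e]; rewrite mem_enum => Se ->; rewrite mem_iota.
by have := hb e Se; clear; lia.
Qed.

Lemma outd_bound (S : {set E}) D e : properS S -> (forall e, e \in S -> f e < D) ->
  e \in S -> outd S e <= D.-1.
Proof.
move=> pS hD Se.
pose A1 := [set e' in S | (e' != e) && (u e' == u e) && (f e < f e')].
pose A2 := [set e' in S | (e' != e) && (v e' == v e) && (f e' < f e)].
have sub : [set e' in S | dom e' e] \subset A1 :|: A2.
  apply/subsetP=> x; rewrite !inE => /andP[Sx /andP[nx /orP[] /andP[h1 h2]]];
  by rewrite Sx nx h1 h2 ?orbT.
have c1 : #|A1| <= D - (f e).+1.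
  apply: uniq_bound.
    move=> x y /[!inE] /andP[Sx /andP[/andP[nx ux] _]] /andP[Sy /andP[/andP[ny uy] _]] fxy.
    apply/eqP; case: (eqVneq x y) => // nxy.
    have : adjE u v x y by rewrite /adjE nxy (eqP ux) (eqP uy) eqxx.
    by move/(pS x y Sx Sy); rewrite fxy eqxx.
  by move=> x /[!inE] /andP[Sx /andP[_ fx]]; rewrite fx (hD x Sx).
have c2 : #|A2| <= f e - 0.
  apply: uniq_bound.
    move=> x y /[!inE] /andP[Sx /andP[/andP[nx ux] _]] /andP[Sy /andP[/andP[ny uy] _]] fxy.
    apply/eqP; case: (eqVneq x y) => // nxy.
    have : adjE u v x y by rewrite /adjE nxy (eqP ux) (eqP uy) eqxx orbT.
    by move/(pS x y Sx Sy); rewrite fxy eqxx.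
  by move=> x /[!inE] /andP[Sx /andP[_ fx]]; rewrite fx.
have := subset_leq_card sub; have := cardsU A1 A2; have := hD e Se; rewrite /outd; move: c1 c2; clear; lia.
Qed.

End Galvin.

Lemma cards3 (T : finType) (a b c : T) : a != b -> a != c -> b != c -> #|[set a; b; c]| = 3.
Proof.
move=> ab ac bc; rewrite -setUA cardsU1 cards2 bc !inE negb_or ab ac.
by [].
Qed.

Lemma card_fib1 (T1 T2 : finType) (S : {set T1 * T2}) s :
  #|[set e in S | e.1 == s]| = #|[set j | (s, j) \in S]|.
Proof.
have inj : injective (fun j : T2 => (s, j)) by move=> x y [].
have -> : [set e in S | e.1 == s] = (fun j => (s, j)) @: [set j | (s, j) \in S].
  apply/setP => -[a b]; rewrite !inE.
  apply/andP/imsetP.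
    case=> Se /eqP /= ea; exists b; first by rewrite inE -ea.
    by rewrite ea.
  by case=> j; rewrite inE => Sj [-> ->]; rewrite Sj eqxx.
by rewrite card_imset.
Qed.

Lemma card_fib2 (T1 T2 : finType) (S : {set T1 * T2}) j :
  #|[set e in S | e.2 == j]| = #|[set s | (s, j) \in S]|.
Proof.
have inj : injective (fun s : T1 => (s, j)) by move=> x y [].
have -> : [set e in S | e.2 == j] = (fun s => (s, j)) @: [set s | (s, j) \in S].
  apply/setP => -[a b]; rewrite !inE.
  apply/andP/imsetP.
    case=> Se /eqP /= ea; exists a; first by rewrite inE -ea.
    by rewrite ea.
  by case=> s; rewrite inE => Sj [-> ->]; rewrite Sj eqxx.
by rewrite card_imset.
Qed.

Lemma adj_fst (T1 T2 : finType) (s : T1) (j j' : T2) : j != j' -> adjE fst snd (s, j) (s, j').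
Proof. by move=> ne; rewrite /adjE /= xpair_eqE eqxx ne. Qed.
Lemma adj_snd (T1 T2 : finType) (s s' : T1) (j : T2) : s != s' -> adjE fst snd (s, j) (s', j).
Proof. by move=> ne; rewrite /adjE /= xpair_eqE !eqxx andbT ne orbT. Qed.

Section Main.
Variables (n : nat) (P : 'I_n -> 'I_n -> option 'I_n) (r1 r2 c1 c2 c3 : 'I_n).
Hypothesis Hn : 8 <= n.
Hypothesis HP : is_partial_latin P.
Hypotheses (H12 : r1 != r2) (Hc12 : c1 != c2) (Hc13 : c1 != c3) (Hc23 : c2 != c3).
Hypothesis Hfill : forall i j,
     (P i j != None) = [|| i == r1, i == r2, j == c1, j == c2 | j == c3].
Hypothesis Hblk : #|[set s | [exists i in [:: r1; r2], exists j in [:: c1; c2; c3],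
                P i j == Some s]]| = 3.

Fact Sblk_key : unit. Proof. exact: tt. Qed.
Definition Sblk := locked_with Sblk_key [set s | [exists i in [:: r1; r2], exists j in [:: c1; c2; c3],
                P i j == Some s]].
Lemma SblkE : Sblk = [set s | [exists i in [:: r1; r2], exists j in [:: c1; c2; c3],
                P i j == Some s]].
Proof. by rewrite /Sblk; case: Sblk_key. Qed.
Definition get i j := odflt r1 (P i j).
Definition inR (i : 'I_n) := (i == r1) || (i == r2).
Definition inC (j : 'I_n) := [|| j == c1, j == c2 | j == c3].
Fact I_key : unit. Proof. exact: tt. Qed.
Definition Iset := locked_with I_key [set i | ~~ inR i].
Lemma inIset i : (i \in Iset) = ~~ inR i.
Proof. by rewrite /Iset; case: I_key; rewrite inE. Qed.
Fact J_key : unit. Proof. exact: tt. Qed.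
Definition Jset := locked_with J_key [set j | ~~ inC j].
Lemma inJset j : (j \in Jset) = ~~ inC j.
Proof. by rewrite /Jset; case: J_key; rewrite inE. Qed.
Fact F_key : unit. Proof. exact: tt. Qed.
Definition F i := locked_with F_key [set get i c1; get i c2; get i c3].
Lemma FE i : F i = [set get i c1; get i c2; get i c3].
Proof. by rewrite /F; case: F_key. Qed.

Lemma filledP i j : inR i || inC j -> P i j = Some (get i j).
Proof.
move=> h; have : P i j != None by rewrite Hfill; move: h; rewrite /inR /inC; case/orP=> /orP[]->; rewrite ?orbT.
by rewrite /get; case: (P i j).
Qed.

Lemma rowinj i j1 j2 : inR i || inC j1 -> inR i || inC j2 -> get i j1 = get i j2 -> j1 = j2.
Proof.
move=> h1 h2 e; case: HP => hr _; apply: (hr i j1 j2 (get i j1)); rewrite filledP //.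
by rewrite e.
Qed.

Lemma colinj i1 i2 j : inR i1 || inC j -> inR i2 || inC j -> get i1 j = get i2 j -> i1 = i2.
Proof.
move=> h1 h2 e; case: HP => _ hc; apply: (hc i1 i2 j (get i1 j)); rewrite filledP //.
by rewrite e.
Qed.

Lemma inR1 : inR r1. Proof. by rewrite /inR eqxx. Qed.
Lemma inR2 : inR r2. Proof. by rewrite /inR eqxx orbT. Qed.
Lemma inC1 : inC c1. Proof. by rewrite /inC eqxx. Qed.
Lemma inC2 : inC c2. Proof. by rewrite /inC eqxx orbT. Qed.
Lemma inC3 : inC c3. Proof. by rewrite /inC eqxx !orbT. Qed.

Lemma rowsurj i s : inR i -> exists j, get i j = s.
Proof.
move=> hi; have inj : injective (get i) by move=> j1 j2; apply: rowinj; rewrite hi.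
case: (injF_bij inj) => g _ gK; by exists (g s).
Qed.

Lemma colsurj j s : inC j -> exists i, get i j = s.
Proof.
move=> hj; have inj : injective (get^~ j) by move=> i1 i2; apply: colinj; rewrite hj orbT.
case: (injF_bij inj) => g _ gK; by exists (g s).
Qed.

Lemma F_card i : #|F i| = 3.
Proof.
have ne : forall j1 j2, inC j1 -> inC j2 -> j1 != j2 -> get i j1 != get i j2.
  by move=> j1 j2 h1 h2 nj; apply/eqP=> e; case/eqP: nj; apply: (rowinj _ _ e); rewrite ?h1 ?h2 orbT.
by rewrite FE cards3 // ne // (inC1, inC2, inC3).
Qed.

Lemma FP i x : reflect (exists2 j, inC j & get i j = x) (x \in F i).
Proof.
rewrite FE; apply: (iffP idP).
  rewrite !inE ?orbA => /orP[/orP[]|] /eqP ->; by [exists c1; rewrite ?inC1|exists c2; rewrite ?inC2|exists c3; rewrite ?inC3].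
case=> j; rewrite /inC !inE => /or3P[] /eqP -> <-; by rewrite eqxx ?orbT.
Qed.

Lemma Sblk_F i : inR i -> Sblk = F i.
Proof.
move=> hi; apply/eqP; rewrite eq_sym eqEcard F_card SblkE Hblk leqnn andbT.
apply/subsetP=> x /FP[j hj <-]; rewrite inE.
apply/existsP; exists i; rewrite !inE; case/orP: hi => /eqP -> ; rewrite eqxx ?orbT /=;
apply/existsP; exists j; rewrite !inE filledP ?hj ?orbT ?eqxx ?andbT //;
by move: hj; rewrite /inC.
Qed.


Lemma inC_get i j : inC j -> get i j \in F i.
Proof. by move=> hj; apply/FP; exists j. Qed.

Lemma rowsF_card s : #|[set i | s \in F i]| = 3.
Proof.
case: (colsurj s inC1) => i1 e1; case: (colsurj s inC2) => i2 e2; case: (colsurj s inC3) => i3 e3.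
have ne : forall ia ib ja jb, inC ja -> inC jb -> ja != jb -> get ia ja = s -> get ib jb = s -> ia != ib.
  move=> ia ib ja jb ha hb nj ea eb; apply/eqP=> eab; case/eqP: nj.
  by apply: (rowinj (i := ia)); rewrite ?ha ?hb ?orbT // ea eab eb.
have -> : [set i | s \in F i] = [set i1; i2; i3].
  apply/setP=> i; rewrite in_set; apply/idP/idP.
    case/FP=> j; rewrite /inC !inE => /or3P[] /eqP -> h.
    - by rewrite (colinj (i1 := i) (i2 := i1) (j := c1)) ?inC1 ?orbT ?h ?e1 ?eqxx.
    - by rewrite (colinj (i1 := i) (i2 := i2) (j := c2)) ?inC2 ?orbT ?h ?e2 ?eqxx ?orbT.
    - by rewrite (colinj (i1 := i) (i2 := i3) (j := c3)) ?inC3 ?orbT ?h ?e3 ?eqxx ?orbT.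
  case/setUP=> [/setU1P[->|/set1P->]|/set1P->]; apply/FP.
  - by exists c1; rewrite ?inC1.
  - by exists c2; rewrite ?inC2.
  - by exists c3; rewrite ?inC3.
apply: cards3.
- exact: (ne i1 i2 c1 c2 inC1 inC2 Hc12 e1 e2).
- exact: (ne i1 i3 c1 c3 inC1 inC3 Hc13 e1 e3).
- exact: (ne i2 i3 c2 c3 inC2 inC3 Hc23 e2 e3).
Qed.

Lemma card_Iset : #|Iset| = n - 2.
Proof.
have -> : Iset = ~: [set r1; r2] by apply/setP=> i; rewrite inIset !inE /inR.
by have := cardsC [set r1; r2]; rewrite cards2 H12 card_ord; clear; lia.
Qed.

Lemma card_Jset : #|Jset| = n - 3.
Proof.
have -> : Jset = ~: [set c1; c2; c3] by apply/setP=> i; rewrite inJset !inE /inC ?orbA.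
by have := cardsC [set c1; c2; c3]; rewrite cards3 // card_ord; clear; lia.
Qed.

Lemma card_D : #|~: Sblk| = n - 3.
Proof. by have := cardsC Sblk; rewrite {1}SblkE Hblk card_ord; clear; lia. Qed.

Lemma notinC j : j \in Jset -> inC j = false.
Proof. by rewrite inJset => /negbTE. Qed.
Lemma notinR i : i \in Iset -> inR i = false.
Proof. by rewrite inIset => /negbTE. Qed.

Lemma getJ_notS i j : inR i -> j \in Jset -> get i j \notin Sblk.
Proof.
move=> hi hj; rewrite (Sblk_F hi); apply/negP=> /FP[j' hj' e].
have := rowinj (i := i) (j1 := j') (j2 := j); rewrite hi => /(_ isT isT e) ej.
by move: hj; rewrite -ej inJset hj'.
Qed.

Lemma get12 j : get r1 j != get r2 j.
Proof.
apply/eqP=> e; case/eqP: H12; apply: (colinj (j := j)); by rewrite ?inR1 ?inR2.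
Qed.

Lemma colS_inJ i s : inR i -> s \notin Sblk -> forall j, get i j = s -> j \in Jset.
Proof.
move=> hi ns j e; rewrite inJset; apply/negP=> hj; case/negP: ns.
by rewrite (Sblk_F hi) -e inC_get.
Qed.

Lemma rowS_inI s : s \notin Sblk -> forall i, s \in F i -> i \in Iset.
Proof.
move=> ns i hF; rewrite inIset; apply/negP=> hi; case/negP: ns; by rewrite (Sblk_F hi).
Qed.

Lemma uniqI x : x \in Sblk -> #|[set i in Iset | x \in F i]| = 1.
Proof.
move=> hx.
have h1 : r1 \in [set i | x \in F i] by rewrite inE -(Sblk_F inR1).
have h2 : r2 \in [set i | x \in F i] :\ r1 by rewrite in_setD1 in_set eq_sym H12 -(Sblk_F inR2).
have := cardsD1 r1 [set i | x \in F i]; rewrite h1 rowsF_card.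
have := cardsD1 r2 ([set i | x \in F i] :\ r1); rewrite h2.
have -> : [set i in Iset | x \in F i] = [set i | x \in F i] :\ r1 :\ r2.
  by apply/setP=> i; rewrite !inE inIset /inR negb_or; case: (i == r1); case: (i == r2); rewrite ?andbF.
move=> a b; move: a b; clear; lia.
Qed.


Fact SB_key : unit. Proof. exact: tt. Qed.
Definition SB := locked_with SB_key [set e : 'I_n * 'I_n | [&& e.1 \notin Sblk, e.2 \in Jset,
   e.1 != get r1 e.2 & e.1 != get r2 e.2]].
Lemma inSB e : (e \in SB) = [&& e.1 \notin Sblk, e.2 \in Jset,
   e.1 != get r1 e.2 & e.1 != get r2 e.2].
Proof. by rewrite /SB; case: SB_key; rewrite inE. Qed.
Definition Lst (e : 'I_n * 'I_n) := Iset :\: [set i | e.1 \in F i].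

Lemma SB_row s : s \notin Sblk -> #|[set e in SB | e.1 == s]| = n - 5.
Proof.
move=> ns; rewrite card_fib1.
case: (rowsurj s inR1) => j1 e1; case: (rowsurj s inR2) => j2 e2.
have J1 := colS_inJ inR1 ns e1; have J2 := colS_inJ inR2 ns e2.
have n12 : j2 != j1 by apply/eqP=> ej; have := get12 j1; rewrite e1 -ej e2 eqxx.
have -> : [set j | (s, j) \in SB] = Jset :\ j1 :\ j2.
  apply/setP=> j; rewrite !inE inSB /= ns /=.
  have -> : (s != get r1 j) = (j != j1).
    apply/idP/idP; apply: contra => /eqP h; apply/eqP.
      by rewrite h e1.
    by apply: (rowinj (i := r1)); rewrite ?inR1 // -h e1.
  have -> : (s != get r2 j) = (j != j2).
    apply/idP/idP; apply: contra => /eqP h; apply/eqP.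
      by rewrite h e2.
    by apply: (rowinj (i := r2)); rewrite ?inR2 // -h e2.
  by case: (j \in Jset); case: (j != j1); case: (j != j2); rewrite ?andbF.
have := cardsD1 j1 Jset; rewrite J1 card_Jset.
have := cardsD1 j2 (Jset :\ j1); rewrite !inE n12 J2 /=.
move=> a b; move: a b Hn; clear; lia.
Qed.

Lemma SB_col j : j \in Jset -> #|[set e in SB | e.2 == j]| = n - 5.
Proof.
move=> hj; rewrite card_fib2.
have x1 := getJ_notS inR1 hj; have x2 := getJ_notS inR2 hj.
have -> : [set s | (s, j) \in SB] = (~: Sblk) :\ get r1 j :\ get r2 j.
  apply/setP=> s; rewrite !inE inSB /= hj /=.
  by case: (s \in Sblk); case: (s == get r1 j); case: (s == get r2 j); rewrite ?andbF.
have := cardsD1 (get r1 j) (~: Sblk); rewrite inE x1 card_D.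
have := cardsD1 (get r2 j) ((~: Sblk) :\ get r1 j); rewrite !inE x2 eq_sym get12 /=.
move=> a b; move: a b Hn; clear; lia.
Qed.

Lemma Lst_card e : e \in SB -> #|Lst e| = n - 5.
Proof.
case: e => s j; rewrite inSB /= => /andP[ns _].
rewrite /Lst cardsD card_Iset.
have -> : Iset :&: [set i | s \in F i] = [set i | s \in F i].
  by apply/setIidPr/subsetP=> i; rewrite in_set => h; apply: rowS_inI h.
by rewrite rowsF_card; move: Hn; clear; lia.
Qed.

Lemma col_exists : exists col : 'I_n * 'I_n -> 'I_n,
  (forall e, e \in SB -> col e \in Lst e) /\
  (forall e e', e \in SB -> e' \in SB -> adjE fst snd e e' -> col e != col e').
Proof.
have [fB [fb fp]] : exists f : 'I_n * 'I_n -> nat, (forall e, e \in SB -> f e < n - 5) /\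
    (forall e e', e \in SB -> e' \in SB -> adjE fst snd e e' -> f e != f e').
  apply: (@konig _ _ _ fst snd r1 (n - 5) SB (~: Sblk) Jset).
  - by move=> [s j]; rewrite inSB /= => /and4P[ns hj _ _]; rewrite inE ns hj.
  - by move=> s; rewrite inE; apply: SB_row.
  - exact: SB_col.
have pB : properS fst snd fB SB by move=> e e' Se Se' ad; apply: fp.
apply: (kernel_col r1 (leqnn #|SB|) pB) => e Se.
have := outd_bound pB fb Se; rewrite Lst_card //; move: Hn; clear; lia.
Qed.


Section Dphase.
Variable col : 'I_n * 'I_n -> 'I_n.
Hypothesis colL : forall e, e \in SB -> col e \in Lst e.
Hypothesis colP : forall e e', e \in SB -> e' \in SB -> adjE fst snd e e' -> col e != col e'.

Definition Dval i j := [pick s | ((s, j) \in SB) && (col (s, j) == i)].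

Lemma Dval_some i j s : Dval i j = Some s -> (s, j) \in SB /\ col (s, j) = i.
Proof.
rewrite /Dval; case: pickP => [s' /andP[h1 /eqP h2] [<-]|//]; by split.
Qed.

Lemma Dval_eq i j s : (s, j) \in SB -> col (s, j) = i -> Dval i j = Some s.
Proof.
move=> h1 h2; rewrite /Dval; case: pickP => [s' /andP[h1' /eqP h2']|h].
  case: (eqVneq s' s) => [->//|ne].
  have : adjE fst snd (s', j) (s, j) by apply: adj_snd.
  by move/(colP h1' h1); rewrite h2 h2' eqxx.
by move: (h s); rewrite h1 h2 eqxx.
Qed.

Lemma colI e : e \in SB -> col e \in Iset.
Proof. by move/colL; rewrite /Lst inE => /andP[]. Qed.

Lemma colF e : e \in SB -> e.1 \notin F (col e).
Proof. by move/colL; rewrite /Lst !inE => /andP[]. Qed.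

Lemma SB_fst e : e \in SB -> e.1 \notin Sblk.
Proof. by rewrite inSB => /and4P[]. Qed.

Lemma col_surj s i : s \notin Sblk -> i \in Iset -> s \notin F i ->
  exists j, (s, j) \in SB /\ col (s, j) = i.
Proof.
move=> ns hi nF.
pose N := [set j | (s, j) \in SB].
have cN : #|N| = n - 5 by rewrite -card_fib1 SB_row.
have inj : {in N &, injective (fun j => col (s, j))}.
  move=> j j'; rewrite !inE => h h' e; apply/eqP; apply/negPn/negP=> ne.
  have : adjE fst snd (s, j) (s, j') by apply: adj_fst.
  by move/(colP h h'); rewrite e eqxx.
have sub : (fun j => col (s, j)) @: N \subset Lst (s, s).
  by apply/subsetP=> x /imsetP[j]; rewrite inE => h ->; exact: (colL h).
have cL : #|Lst (s, s)| = n - 5.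
  rewrite /Lst cardsD card_Iset.
  have -> : Iset :&: [set i | (s, s).1 \in F i] = [set i | s \in F i].
    by apply/setIidPr/subsetP=> x; rewrite in_set => h; apply: rowS_inI h.
  by rewrite rowsF_card; move: Hn; clear; lia.
have : (fun j => col (s, j)) @: N = Lst (s, s).
  by apply/eqP; rewrite eqEcard sub (card_in_imset inj) cN cL leqnn.
move/setP=> /(_ i); rewrite /Lst !inE hi nF /= => /imsetP[j]; rewrite inE => h ->.
by exists j.
Qed.

Definition Occ i := [set j in Jset | Dval i j != None].
Definition Ds i := [set s | (s \notin Sblk) && (s \notin F i)].

Lemma Occ_card i : i \in Iset -> #|Occ i| = #|Ds i|.
Proof.
move=> hi.
have inj : {in Occ i &, injective (fun j => odflt r1 (Dval i j))}.
  move=> j j'; rewrite !inE => /andP[_ h] /andP[_ h'].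
  case E1: (Dval i j) h => [s|//] _; case E2: (Dval i j') h' => [s'|//] _ /= ess.
  move: E2; rewrite -ess => E2.
  case: (Dval_some E1) => S1 C1; case: (Dval_some E2) => S2 C2.
  apply/eqP; apply/negPn/negP=> ne.
  have : adjE fst snd (s, j) (s, j') by apply: adj_fst.
  by move/(colP S1 S2); rewrite C1 C2 eqxx.
rewrite -(card_in_imset inj); apply: eq_card => s; apply/imsetP/idP.
  case=> j; rewrite !inE => /andP[hj]; case E1: (Dval i j) => [s'|//] _ /= ->.
  case: (Dval_some E1) => S1 C1.
  by rewrite (SB_fst S1) /=; have := colF S1; rewrite C1.
rewrite !inE => /andP[ns nF].
case: (col_surj ns hi nF) => j [Sj Cj].
exists j; last by rewrite (Dval_eq Sj Cj).
by rewrite !inE (Dval_eq Sj Cj) andbT; move: Sj; rewrite inSB => /and4P[].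
Qed.

Lemma colfree_card j : j \in Jset -> #|[set i in Iset | Dval i j != None]| = n - 5.
Proof.
move=> hj.
have inj : {in [set i in Iset | Dval i j != None] &, injective (fun i => odflt r1 (Dval i j))}.
  move=> i i'; rewrite !inE => /andP[_ h] /andP[_ h'].
  case E1: (Dval i j) h => [s|//] _; case E2: (Dval i' j) h' => [s'|//] _ /= ess.
  move: E2; rewrite -ess => E2.
  by case: (Dval_some E1) => _ <-; case: (Dval_some E2) => _ <-.
rewrite -(card_in_imset inj) -(SB_col hj) card_fib2; apply: eq_card => s.
apply/imsetP/idP.
  case=> i; rewrite !inE => /andP[hi]; case E1: (Dval i j) => [s'|//] _ /= ->.
  by case: (Dval_some E1).
rewrite inE => Sj; exists (col (s, j)); last by rewrite (Dval_eq Sj erefl).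
by rewrite !inE (colI Sj) (Dval_eq Sj erefl).
Qed.


Definition E2 := ('I_n * 'I_n + 'I_n * 'I_n)%type.
Definition u2 (e : E2) : 'I_n := match e with inl p => p.1 | inr p => p.1 end.
Definition v2 (e : E2) : option 'I_n := match e with inl p => Some p.2 | inr _ => None end.
Definition Q := [set p : 'I_n * 'I_n | [&& p.1 \in Iset, p.2 \in Sblk & p.2 \in F p.1]].
Definition S2 : {set E2} := [set e : E2 | match e with
  | inl p => [&& p.1 \in Iset, p.2 \in Jset & Dval p.1 p.2 == None]
  | inr p => p \in Q end].
Definition XB2 := [set o : option 'I_n | if o is Some j then j \in Jset else true].

Lemma Q_uniq p p' : p \in Q -> p' \in Q -> p.2 = p'.2 -> p = p'.
Proof.
case: p => i x; case: p' => i' x'; rewrite !inE /= => /and3P[hi hx hF] /and3P[hi' hx' hF'] ex.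
subst x'; have := uniqI hx; move/eqP/cards1P=> [a ha].
have : i \in [set i in Iset | x \in F i] by rewrite inE hi hF.
have : i' \in [set i in Iset | x \in F i] by rewrite inE hi' hF'.
by rewrite ha !inE => /eqP -> /eqP ->.
Qed.

Lemma Q_card : #|Q| = 3.
Proof.
have inj : {in Q &, injective snd} by move=> p p' hp hp'; apply: Q_uniq.
rewrite -(card_in_imset inj) -Hblk -SblkE; apply: eq_card => x.
apply/imsetP/idP.
  by case=> p; rewrite inE => /and3P[_ h _] ->.
move=> hx; have := uniqI hx; move/eqP/cards1P=> [a ha].
have : a \in [set i in Iset | x \in F i] by rewrite ha inE.
by rewrite inE => /andP[h1 h2]; exists (a, x); rewrite // inE h1 hx h2.
Qed.

Lemma S2_row i : i \in Iset -> #|[set e in S2 | u2 e == i]| = 3.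
Proof.
move=> hi.
pose Fr := [set j in Jset | Dval i j == None].
have -> : [set e in S2 | u2 e == i] =
   (fun j => inl (i, j) : E2) @: Fr :|: (fun x => inr (i, x) : E2) @: (F i :&: Sblk).
  apply/setP=> -[[a b]|[a x]]; rewrite !inE /=.
  - apply/idP/idP.
      case/andP=> /and3P[ha hb hD] /eqP ea; subst a; apply/orP; left.
      by apply/imsetP; exists b; rewrite // !inE hb hD.
    case/orP=> /imsetP[y]; rewrite !inE // => /andP[hy hD] [-> ->].
    by rewrite hi hy hD eqxx.
  - apply/idP/idP.
      case/andP=> /and3P[ha hx hF] /eqP ea; subst a; apply/orP; right.
      by apply/imsetP; exists x; rewrite // !inE hx hF.
    case/orP=> /imsetP[y]; rewrite !inE // => /andP[hF hx] [-> ->].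
    by rewrite hi hx hF eqxx.
rewrite cardsU.
have -> : (fun j => inl (i, j) : E2) @: Fr :&: (fun x => inr (i, x) : E2) @: (F i :&: Sblk) = set0.
  apply/setP=> e; rewrite !inE; apply/negbTE/negP=> /andP[/imsetP[y _ ->] /imsetP[z _]] //.
rewrite cards0 subn0 !card_imset; last by move=> x y [].
  2: by move=> x y [].
have hFr : #|Fr| = #|Jset| - #|Occ i|.
  have -> : Fr = Jset :\: Occ i.
    by apply/setP=> j; rewrite !inE; case: (j \in Jset); case: (Dval i j).
  have sOJ : Occ i \subset Jset by apply/subsetP=> j; rewrite inE => /andP[].
  by rewrite cardsD (setIidPr sOJ).
have hO := Occ_card hi.
have hOJ : #|Occ i| <= #|Jset| by apply: subset_leq_card; apply/subsetP=> j; rewrite inE => /andP[].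
have hDs : Ds i = ~: Sblk :\: F i by apply/setP=> x; rewrite !inE andbC.
have h1 := cardsID (F i) (~: Sblk).
have h2 : ~: Sblk :&: F i = F i :\: Sblk by rewrite setDE setIC.
have h3 := cardsID Sblk (F i).
rewrite hDs in hO; rewrite h2 card_D in h1; rewrite F_card in h3.
rewrite hFr hO card_Jset.
move: h1 h3; clear; lia.
Qed.

Lemma S2_col j : j \in Jset -> #|[set e in S2 | v2 e == Some j]| = 3.
Proof.
move=> hj.
have -> : [set e in S2 | v2 e == Some j] =
   (fun i => inl (i, j) : E2) @: [set i in Iset | Dval i j == None].
  apply/setP=> -[[a b]|[a x]]; rewrite !inE /=.
  - apply/idP/idP.
      case/andP=> /and3P[ha hb hD] /eqP [eb]; subst b.
      by apply/imsetP; exists a; rewrite // !inE ha hD.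
    case/imsetP=> y; rewrite !inE => /andP[hy hD] [-> ->].
    by rewrite hy hj hD eqxx.
  - by rewrite andbF; apply/esym/negbTE/negP=> /imsetP[y _].
rewrite card_imset; last by move=> x y [].
have := colfree_card hj.
have : [set i in Iset | Dval i j == None] = Iset :\: [set i in Iset | Dval i j != None].
  by apply/setP=> i; rewrite !inE; case: (i \in Iset); case: (Dval i j).
move=> ->; rewrite cardsD.
have -> : Iset :&: [set i in Iset | Dval i j != None] = [set i in Iset | Dval i j != None].
  by apply/setIidPr/subsetP=> i; rewrite inE => /andP[].
rewrite card_Iset => ->; move: Hn; clear; lia.
Qed.

Lemma S2_none : #|[set e in S2 | v2 e == None]| = 3.
Proof.
have -> : [set e in S2 | v2 e == None] = (fun p => inr p : E2) @: Q.
  apply/setP=> -[[a b]|p]; rewrite !inE /=.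
  - by rewrite andbF; apply/esym/negbTE/negP=> /imsetP[y _].
  - rewrite andbT; apply/idP/imsetP.
      by move=> h; exists p => //; rewrite inE.
    by case=> q hq [->]; move: hq; rewrite inE.
by rewrite card_imset ?Q_card //; move=> x y [].
Qed.

Lemma c2_exists : exists c2 : E2 -> nat, (forall e, e \in S2 -> c2 e < 3) /\
    (forall e e', e \in S2 -> e' \in S2 -> adjE u2 v2 e e' -> c2 e != c2 e').
Proof.
apply: (@konig _ _ _ u2 v2 None 3 S2 Iset XB2).
- move=> -[[a b]|[a x]]; rewrite !inE /=.
  + by case/and3P=> -> -> _.
  + by case/and3P=> -> _ _.
- exact: S2_row.
- move=> -[j|]; rewrite inE /=; [exact: S2_col|move=> _; exact: S2_none].
Qed.


Section Aphase.
Variable cc : E2 -> nat.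
Hypothesis ccb : forall e, e \in S2 -> cc e < 3.
Hypothesis ccp : forall e e', e \in S2 -> e' \in S2 -> adjE u2 v2 e e' -> cc e != cc e'.

Lemma inS2l i j : ((inl (i, j) : E2) \in S2) = [&& i \in Iset, j \in Jset & Dval i j == None].
Proof. by rewrite in_set. Qed.
Lemma inS2r p : ((inr p : E2) \in S2) = (p \in Q).
Proof. by rewrite in_set. Qed.

Lemma c2_neq e e' : e \in S2 -> e' \in S2 -> e != e' -> (u2 e == u2 e') || (v2 e == v2 e') ->
  cc e != cc e'.
Proof. by move=> h h' ne hv; apply: ccp => //; rewrite /adjE ne hv. Qed.

Lemma Qcol_uniq p p' : p \in Q -> p' \in Q -> cc (inr p) = cc (inr p') -> p = p'.
Proof.
move=> hp hp' e; apply/eqP; apply/negPn/negP=> ne.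
move: (c2_neq (e := inr p) (e' := inr p')); rewrite !inS2r /= eqxx orbT => /(_ hp hp') h.
have ne' : (inr p : E2) != inr p' by apply: contra ne => /eqP [->].
by move: (h ne' isT); rewrite e eqxx.
Qed.

Lemma Qcol_surj k : k < 3 -> exists2 p, p \in Q & cc (inr p) = k.
Proof.
move=> hk.
pose g p : 'I_3 := inord (cc (inr p)).
have hb : forall p, p \in Q -> cc (inr p) < 3 by move=> p hp; apply: ccb; rewrite inS2r.
have inj : {in Q &, injective g}.
  move=> p p' hp hp' e; apply: Qcol_uniq => //.
  by have := congr1 val e; rewrite /= !inordK ?hb.
have : g @: Q = [set: 'I_3].
  by apply/eqP; rewrite eqEcard subsetT cardsT card_ord (card_in_imset inj) Q_card.
move/setP=> /(_ (inord k)); rewrite inE => /imsetP[p hp e].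
exists p => //; have := congr1 val e; rewrite /= !inordK ?hb //.
Qed.

Definition abcval i j := if [pick p in Q | cc (inr p) == cc (inl (i, j))] is Some p then p.2 else r1.

Lemma abcval_spec i j : (inl (i, j) : E2) \in S2 ->
  exists p, [/\ p \in Q, cc (inr p) = cc (inl (i, j)) & abcval i j = p.2].
Proof.
move=> h; rewrite /abcval; case: pickP => [p /andP[hp /eqP hc]|hn].
  by exists p.
case: (Qcol_surj (ccb h)) => p hp hc.
by move: (hn p); rewrite hp hc eqxx.
Qed.

Definition Lsq i j := if (i \in Iset) && (j \in Jset) then
  (if Dval i j is Some s then s else abcval i j) else get i j.

Lemma QS p : p \in Q -> p.2 \in Sblk.
Proof. by rewrite inE => /and3P[]. Qed.

Lemma V1 i j : i \in Iset -> j \in Jset -> Lsq i j \notin F i.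
Proof.
move=> hi hj; rewrite /Lsq hi hj /=.
case E1: (Dval i j) => [s|].
  by case: (Dval_some E1) => h <-; apply: colF.
have hS : (inl (i, j) : E2) \in S2 by rewrite inS2l hi hj E1.
case: (abcval_spec hS) => p [hp hc ->]; apply/negP=> hF.
have hq : (i, p.2) \in Q by rewrite inE /= hi (QS hp) hF.
have ep := Q_uniq hp hq erefl.
have hu : u2 (inl (i, j)) == u2 (inr p) by rewrite /= ep.
move: (c2_neq (e := inl (i, j)) (e' := inr p) hS); rewrite inS2r hp hu -hc eqxx.
by move/(_ isT isT isT).
Qed.

Lemma V2 i j : i \in Iset -> j \in Jset -> (Lsq i j != get r1 j) && (Lsq i j != get r2 j).
Proof.
move=> hi hj; rewrite /Lsq hi hj /=.
case E1: (Dval i j) => [s|].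
  by case: (Dval_some E1) => h _; move: h; rewrite inSB /= => /and4P[_ _ -> ->].
have hS : (inl (i, j) : E2) \in S2 by rewrite inS2l hi hj E1.
case: (abcval_spec hS) => p [hp hc ->].
have h1 := getJ_notS inR1 hj; have h2 := getJ_notS inR2 hj; have h3 := QS hp.
by apply/andP; split; apply/eqP=> e; [move: h1|move: h2]; rewrite -e h3.
Qed.

Lemma Lrow i j1 j2 : Lsq i j1 = Lsq i j2 -> j1 = j2.
Proof.
case: (boolP (i \in Iset)) => hi; last first.
  rewrite /Lsq (negbTE hi) /=; apply: rowinj; by move: hi; rewrite inIset negbK => ->.
have cases : forall j, (j \in Jset) || inC j by move=> j; rewrite inJset; case: (inC j).
case/orP: (cases j1) => hj1; case/orP: (cases j2) => hj2.
- rewrite /Lsq hi hj1 hj2 /=.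
  case D1: (Dval i j1) => [s|]; case D2: (Dval i j2) => [s'|].
  + move=> es; subst s'.
    case: (Dval_some D1) => S1 C1; case: (Dval_some D2) => S2' C2.
    apply/eqP; apply/negPn/negP=> ne.
    by move: (colP S1 S2' (adj_fst s ne)); rewrite C1 C2 eqxx.
  + have hS : (inl (i, j2) : E2) \in S2 by rewrite inS2l hi hj2 D2.
    case: (abcval_spec hS) => p [hp _ ->] es.
    by case: (Dval_some D1) => S1 _; move: (SB_fst S1) (QS hp); rewrite /= es => /negP.
  + have hS : (inl (i, j1) : E2) \in S2 by rewrite inS2l hi hj1 D1.
    case: (abcval_spec hS) => p [hp _ ->] es.
    by case: (Dval_some D2) => S1 _; move: (SB_fst S1) (QS hp); rewrite /= es => /negP.
  + have hS1 : (inl (i, j1) : E2) \in S2 by rewrite inS2l hi hj1 D1.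
    have hS2 : (inl (i, j2) : E2) \in S2 by rewrite inS2l hi hj2 D2.
    case: (abcval_spec hS1) => p [hp hc ->]; case: (abcval_spec hS2) => p' [hp' hc' ->] ep.
    have pp := Q_uniq hp hp' ep; subst p'.
    apply/eqP; apply/negPn/negP=> ne.
    have := c2_neq hS1 hS2; rewrite /= eqxx /= -hc -hc' eqxx => h.
    have ne' : (inl (i, j1) : E2) != inl (i, j2) by apply: contra ne => /eqP [->].
    by move: (h ne' isT).
- move=> e; have := V1 hi hj1; rewrite e /Lsq hi.
  have -> : j2 \in Jset = false by rewrite inJset hj2.
  by rewrite /= inC_get.
- move=> e; have := V1 hi hj2; rewrite -e /Lsq hi.
  have -> : j1 \in Jset = false by rewrite inJset hj1.
  by rewrite /= inC_get.
- rewrite /Lsq hi.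
  have -> : j1 \in Jset = false by rewrite inJset hj1.
  have -> : j2 \in Jset = false by rewrite inJset hj2.
  by apply: rowinj; rewrite ?hj1 ?hj2 orbT.
Qed.

Lemma Lcol i1 i2 j : Lsq i1 j = Lsq i2 j -> i1 = i2.
Proof.
case: (boolP (j \in Jset)) => hj; last first.
  rewrite /Lsq (negbTE hj) !andbF; apply: colinj; by move: hj; rewrite inJset negbK => ->; rewrite orbT.
have cases : forall i, (i \in Iset) || inR i by move=> i; rewrite inIset; case: (inR i).
case/orP: (cases i1) => hi1; case/orP: (cases i2) => hi2.
- rewrite /Lsq hi1 hi2 hj /=.
  case D1: (Dval i1 j) => [s|]; case D2: (Dval i2 j) => [s'|].
  + move=> es; subst s'.
    by case: (Dval_some D1) => S1 <-; case: (Dval_some D2) => S2' <-.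
  + have hS : (inl (i2, j) : E2) \in S2 by rewrite inS2l hi2 hj D2.
    case: (abcval_spec hS) => p [hp _ ->] es.
    by case: (Dval_some D1) => S1 _; move: (SB_fst S1) (QS hp); rewrite /= es => /negP.
  + have hS : (inl (i1, j) : E2) \in S2 by rewrite inS2l hi1 hj D1.
    case: (abcval_spec hS) => p [hp _ ->] es.
    by case: (Dval_some D2) => S1 _; move: (SB_fst S1) (QS hp); rewrite /= es => /negP.
  + have hS1 : (inl (i1, j) : E2) \in S2 by rewrite inS2l hi1 hj D1.
    have hS2 : (inl (i2, j) : E2) \in S2 by rewrite inS2l hi2 hj D2.
    case: (abcval_spec hS1) => p [hp hc ->]; case: (abcval_spec hS2) => p' [hp' hc' ->] ep.
    have pp := Q_uniq hp hp' ep; subst p'.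
    apply/eqP; apply/negPn/negP=> ne.
    have := c2_neq hS1 hS2; rewrite /= eqxx orbT -hc -hc' eqxx => h.
    have ne' : (inl (i1, j) : E2) != inl (i2, j) by apply: contra ne => /eqP [->].
    by move: (h ne' isT).
- move=> e; have := V2 hi1 hj; rewrite e /Lsq.
  have -> : i2 \in Iset = false by rewrite inIset hi2.
  by case/orP: hi2 => /eqP ->; rewrite /= eqxx ?andbF.
- move=> e; have := V2 hi2 hj; rewrite -e /Lsq.
  have -> : i1 \in Iset = false by rewrite inIset hi1.
  by case/orP: hi1 => /eqP ->; rewrite /= eqxx ?andbF.
- rewrite /Lsq.
  have -> : i1 \in Iset = false by rewrite inIset hi1.
  have -> : i2 \in Iset = false by rewrite inIset hi2.
  by apply: colinj; rewrite ?hi1 ?hi2.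
Qed.

Lemma final_latin : completable P.
Proof.
exists Lsq; split.
  split.
    by move=> i j1 j2 s [<-] /esym [] /Lrow.
  by move=> i1 i2 j s [<-] /esym [] /Lcol.
move=> i j s hP.
have : inR i || inC j.
  have : P i j != None by rewrite hP.
  by rewrite Hfill /inR /inC; case/orP=> [->|/orP[->|/or3P[]->]]; rewrite ?orbT.
move=> h; rewrite /Lsq.
have -> : (i \in Iset) && (j \in Jset) = false.
  by rewrite inIset inJset; case/orP: h => ->; rewrite ?andbF.
by rewrite /get hP.
Qed.

End Aphase.

End Dphase.

End Main.

Unset Implicit Arguments.

Theorem corollary1 (n : nat) (P : 'I_n -> 'I_n -> option 'I_n)
  (r1 r2 c1 c2 c3 : 'I_n) :
  8 <= n ->
  is_partial_latin P ->
  r1 != r2 -> c1 != c2 -> c1 != c3 -> c2 != c3 ->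
  (* exactly the two rows and three columns are filled *)
  (forall i j,
     (P i j != None) = [|| i == r1, i == r2, j == c1, j == c2 | j == c3]) ->
  (* the 2x3 intersection subarray contains exactly three distinct symbols *)
  #|[set s | [exists i in [:: r1; r2], exists j in [:: c1; c2; c3],
                P i j == Some s]]| = 3 ->
  completable P.
Proof.
move=> Hn HP H12 Hc12 Hc13 Hc23 Hfill Hblk.
have [col [colL colP]] := col_exists Hn HP H12 Hc12 Hc13 Hc23 Hfill Hblk.
have [cc [ccb ccp]] := c2_exists Hn HP H12 Hc12 Hc13 Hc23 Hfill Hblk colL colP.
exact: (final_latin HP H12 Hc12 Hc13 Hc23 Hfill Hblk colL colP ccb ccp).
Qed.
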